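(* Let $L$ and $L_1$ be linear partial differential operators in $\mathbb{R}^n$ connected by an Intertwining Laplace Transformation, i.e. there exist differential operators $X_1, X_2, H \in \mathbf{F}[D_{x_1},\ldots,D_{x_n}]$ with $H\neq 0$ such that $L = X_1X_2 - H$, the element $\omega = -[X_2,H]H^{-1}$ of the skew Ore field $\mathbf{F}(D_{x_1},\ldots,D_{x_n})$ is a differential operator (belongs to $\mathbf{F}[D_{x_1},\ldots,D_{x_n}]$), and $L_1 = X_2X_1 + \omega X_1 - H$. Then the principal symbols of $L$ and $L_1$ coincide, $\mathrm{Sym}\, L = \mathrm{Sym}\, L_1$ (even if $\mathrm{ord}\, H \geq \mathrm{ord}\, L$).
   Context: $\mathbf{F}$ is a differential field of functions of $x_1,\ldots,x_n$ (differentially closed, large enough), $\mathbf{F}[D_{x_1},\ldots,D_{x_n}]$ is the ring of linear partial differential operators with coefficients in $\mathbf{F}$, and $\mathbf{F}(D_{x_1},\ldots,D_{x_n})$ is its skew Ore field of formal fractions $P^{-1}Q$ (with $P^{-1}Q\sim K^{-1}N$ iff $SP=TK$, $SQ=TN$ for some nonzero $S,T$); the order of $P^{-1}Q$ is $\mathrm{ord}\,Q-\mathrm{ord}\,P$. $[A,B]=AB-BA$. $\mathrm{Sym}$ denotes the principal symbol (highest-order part, as a polynomial in commuting variables $\xi_i$ corresponding to $D_{x_i}$). *)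

(* Defs.v *)
(* with multinomials' mpoly as the carrier of differential
   operators: an operator  P = \sum_alpha p_alpha D^alpha  (coefficients written
   on the LEFT) is represented by the multivariate polynomial
   \sum_alpha p_alpha 'X_[alpha] in {mpoly F[n]}; the (non-commutative)
   composition of operators is [dmul] below, the additive structure is the one
   of {mpoly F[n]}. *)
From HB Require Import structures.
From mathcomp Require Import all_boot all_order all_algebra.
From mathcomp Require Import mpoly.
Set Implicit Arguments. Unset Strict Implicit. Unset Printing Implicit Defensive.
Import Order.TTheory GRing.Theory.
Local Open Scope ring_scope.

Section DiffOps.
Variables (F : fieldType) (n : nat) (d : 'I_n -> F -> F).
(* d i is the derivation  d/dx_i  of the differential field F *)

Definition dcoef (i : 'I_n) (Q : {mpoly F[n]}) : {mpoly F[n]} :=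
  \sum_(m <- msupp Q) d i Q@_m *: 'X_[m].

(* left composition with D_{x_i}:  D_i o (q D^b) = (d_i q) D^b + q D^(b+e_i) *)
Definition dD (i : 'I_n) (Q : {mpoly F[n]}) : {mpoly F[n]} :=
  dcoef i Q + Q * 'X_i.

Definition dDpow (m : 'X_{1..n}) (Q : {mpoly F[n]}) : {mpoly F[n]} :=
  foldr (fun i acc => iter (m i) (dD i) acc) Q (enum 'I_n).

Definition dmul (P Q : {mpoly F[n]}) : {mpoly F[n]} :=
  \sum_(m <- msupp P) P@_m *: dDpow m Q.

(* principal symbol: the homogeneous part of top order, read as a polynomial
   in the commuting variables xi_i (= 'X_i) *)
Definition Sym (P : {mpoly F[n]}) : {mpoly F[n]} :=
  \sum_(m <- msupp P | mdeg m == (msize P).-1) P@_m *: 'X_[m].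

End DiffOps.

(* Main.v *)
Require Import Defs.
From HB Require Import structures.
From mathcomp Require Import all_boot all_order all_algebra.
From mathcomp Require Import mpoly.
From mathcomp Require Import zify ring.
Import GRing.Theory.
Local Open Scope ring_scope.

Section Work.
Variables (F : fieldType) (n : nat) (d : 'I_n -> F -> F).
Hypothesis d_add : forall i (a b : F), d i (a + b) = d i a + d i b.
Hypothesis d_leibniz : forall i (a b : F), d i (a * b) = d i a * b + a * d i b.
Hypothesis d_comm : forall i j (a : F), d i (d j a) = d j (d i a).

Local Notation MP := {mpoly F[n]}.

Lemma big_supp_ext (G : 'X_{1..n} -> MP) (p : MP) (s : seq 'X_{1..n}) :
  uniq s -> {subset msupp p <= s} -> (forall m, m \notin msupp p -> G m = 0) ->
  \sum_(m <- msupp p) G m = \sum_(m <- s) G m.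
Proof.
move=> us sub G0; symmetry.
rewrite (bigID (fun m => m \in msupp p)) /= [X in _ + X]big1 ?addr0; last first.
  by move=> m /G0.
rewrite -big_filter; apply: perm_big.
apply: uniq_perm; rewrite ?filter_uniq ?msupp_uniq // => m.
rewrite mem_filter; case h: (m \in msupp p) => //=; by rewrite (sub _ h).
Qed.

Definition E (f : F -> F) (g : 'X_{1..n} -> MP) (p : MP) :=
  \sum_(m <- msupp p) f p@_m *: g m.

Lemma E_ext f g p s : f 0 = 0 -> uniq s -> {subset msupp p <= s} ->
  E f g p = \sum_(m <- s) f p@_m *: g m.
Proof.
move=> f0 us sub; apply: big_supp_ext => // m /memN_msupp_eq0 ->.
by rewrite f0 scale0r.
Qed.

Lemma E_add f g p q : (forall a b, f (a + b) = f a + f b) ->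
  E f g (p + q) = E f g p + E f g q.
Proof.
move=> fa; have f0 : f 0 = 0 by apply/(@addrI _ (f 0)); rewrite -fa !addr0.
set s := undup (msupp p ++ msupp q ++ msupp (p + q)).
have us : uniq s by apply: undup_uniq.
rewrite !(@E_ext f g _ s) //; last 3 first.
- by move=> m h; rewrite mem_undup !mem_cat h ?orbT.
- by move=> m h; rewrite mem_undup !mem_cat h ?orbT.
- by move=> m h; rewrite mem_undup !mem_cat h ?orbT.
by rewrite -big_split /=; apply: eq_bigr => m _; rewrite mcoeffD fa scalerDl.
Qed.

Lemma E_opp f g p : (forall a b, f (a + b) = f a + f b) ->
  E f g (- p) = - E f g p.
Proof.
move=> fa; apply/eqP; rewrite -subr_eq0 opprK -E_add // addNr.
by rewrite /E msupp0 big_nil.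
Qed.

Lemma E_scale g c p : E id g (c *: p) = c *: E id g p.
Proof.
rewrite (@E_ext id g (c *: p) (msupp p)) //; last first.
  all: try by move=> m /msuppZ_le.
  all: try by rewrite msupp_uniq.
rewrite /E scaler_sumr; apply: eq_bigr => m _ /=; by rewrite mcoeffZ scalerA.
Qed.

Lemma E0 f g : E f g 0 = 0.
Proof. by rewrite /E msupp0 big_nil. Qed.

Lemma E_X g m : E id g 'X_[m] = g m.
Proof. by rewrite /E msuppX big_seq1 mcoeffX eqxx scale1r. Qed.

Lemma E_sum (T : Type) g (r : seq T) (c : T -> F) (P : T -> MP) :
  E id g (\sum_(x <- r) c x *: P x) = \sum_(x <- r) c x *: E id g (P x).
Proof.
elim: r => [|a r IH]; first by rewrite !big_nil E0.
by rewrite !big_cons E_add // E_scale IH.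
Qed.



Lemma d0 i : d i 0 = 0.
Proof. by apply/(@addrI _ (d i 0)); rewrite -d_add !addr0. Qed.
Lemma d1 i : d i 1 = 0.
Proof. have := d_leibniz i 1 1; rewrite !mulr1 mul1r => h.
by apply/(@addrI _ (d i 1)); rewrite -h addr0. Qed.
Lemma dN i a : d i (- a) = - d i a.
Proof. by apply/(@addrI _ (d i a)); rewrite -d_add !subrr d0. Qed.

Lemma dcoefE i Q : dcoef d i Q = E (d i) (fun m => 'X_[m]) Q.
Proof. by []. Qed.

Lemma dcoefD i P Q : dcoef d i (P + Q) = dcoef d i P + dcoef d i Q.
Proof. exact: (@E_add (d i)). Qed.
Lemma dcoefN i P : dcoef d i (- P) = - dcoef d i P.
Proof. exact: (@E_opp (d i)). Qed.
Lemma dcoef0 i : dcoef d i 0 = 0.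
Proof. exact: E0. Qed.

Lemma dcoefZX i c m : dcoef d i (c *: 'X_[m]) = d i c *: 'X_[m].
Proof.
rewrite dcoefE (@E_ext (d i) _ _ [:: m]) ?d0 //; last first.
  by move=> k /msuppZ_le; rewrite msuppX.
by rewrite big_seq1 mcoeffZ mcoeffX eqxx mulr1.
Qed.

Lemma dcoef_sum (T : Type) i (r : seq T) (c : T -> F) (h : T -> 'X_{1..n}) :
  dcoef d i (\sum_(x <- r) c x *: 'X_[h x]) = \sum_(x <- r) d i (c x) *: 'X_[h x].
Proof.
elim: r => [|a r IH]; first by rewrite !big_nil dcoef0.
by rewrite !big_cons dcoefD dcoefZX IH.
Qed.

Lemma dcoefZ i c Q : dcoef d i (c *: Q) = d i c *: Q + c *: dcoef d i Q.
Proof.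
rewrite dcoefE (@E_ext (d i) _ _ (msupp Q)) ?d0 ?msupp_uniq //; last first.
  by move=> k /msuppZ_le.
transitivity (\sum_(m <- msupp Q) (d i c *: (Q@_m *: 'X_[m]) + c *: (d i Q@_m *: 'X_[m]))).
  by apply: eq_bigr => m _; rewrite mcoeffZ d_leibniz scalerDl !scalerA.
by rewrite big_split -!scaler_sumr -mpolyE.
Qed.

Lemma dcoefMX i Q k : dcoef d i (Q * 'X_[k]) = dcoef d i Q * 'X_[k].
Proof.
rewrite {1}(mpolyE Q) mulr_suml.
under eq_bigr do rewrite -scalerAl -mpolyXD.
rewrite dcoef_sum /dcoef mulr_suml.
by under [RHS]eq_bigr do rewrite -scalerAl -mpolyXD.
Qed.

Lemma dcoef_comm i j Q : dcoef d i (dcoef d j Q) = dcoef d j (dcoef d i Q).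
Proof.
rewrite [dcoef d j Q]/dcoef [dcoef d i Q]/dcoef !dcoef_sum.
by apply: eq_bigr => m _; rewrite d_comm.
Qed.

Lemma dDD i P Q : dD d i (P + Q) = dD d i P + dD d i Q.
Proof. by rewrite /dD dcoefD mulrDl addrACA. Qed.
Lemma dDN i P : dD d i (- P) = - dD d i P.
Proof. by rewrite /dD dcoefN mulNr opprD. Qed.
Lemma dD0 i : dD d i 0 = 0.
Proof. by rewrite /dD dcoef0 mul0r addr0. Qed.
Lemma dDZ i c Q : dD d i (c *: Q) = d i c *: Q + c *: dD d i Q.
Proof. by rewrite /dD dcoefZ -scalerAl scalerDr addrA. Qed.

Lemma dD_comm i j Q : dD d i (dD d j Q) = dD d j (dD d i Q).
Proof.
rewrite /dD !dcoefD !dcoefMX dcoef_comm !mulrDl -!addrA; congr (_ + _).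
by rewrite addrCA (mulrAC Q).
Qed.

Lemma iter_dD_comm i j k Q : iter k (dD d j) (dD d i Q) = dD d i (iter k (dD d j) Q).
Proof. by elim: k => //= k ->; rewrite dD_comm. Qed.

Definition fo (m : 'X_{1..n}) (l : seq 'I_n) Q :=
  foldr (fun j acc => iter (m j) (dD d j) acc) Q l.

Lemma dDpowE m Q : dDpow d m Q = fo m (enum 'I_n) Q.
Proof. by []. Qed.

Lemma fo_U m i l Q : uniq l ->
  fo (m + U_(i))%MM l Q = if i \in l then dD d i (fo m l Q) else fo m l Q.
Proof.
elim: l => [|a l IH] //= /andP [al ul]; rewrite in_cons IH // mnmDE mnm1E.
case: (eqVneq i a) => [->|ne] /=.
  by rewrite (negbTE al) addn1.
rewrite addn0; case: (i \in l) => //; by rewrite iter_dD_comm.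
Qed.

Lemma dDpowU m i Q : dDpow d (m + U_(i))%MM Q = dD d i (dDpow d m Q).
Proof. by rewrite !dDpowE fo_U ?enum_uniq // mem_enum. Qed.

Lemma iter_dDD j k P Q : iter k (dD d j) (P + Q) = iter k (dD d j) P + iter k (dD d j) Q.
Proof. by elim: k => //= k ->; rewrite dDD. Qed.
Lemma iter_dDN j k P : iter k (dD d j) (- P) = - iter k (dD d j) P.
Proof. by elim: k => //= k ->; rewrite dDN. Qed.
Lemma dDpowD m P Q : dDpow d m (P + Q) = dDpow d m P + dDpow d m Q.
Proof. rewrite !dDpowE; elim: (enum 'I_n) => //= a l ->; by rewrite iter_dDD. Qed.
Lemma dDpowN m P : dDpow d m (- P) = - dDpow d m P.
Proof. rewrite !dDpowE; elim: (enum 'I_n) => //= a l ->; by rewrite iter_dDN. Qed.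
Lemma dDpowB m P Q : dDpow d m (P - Q) = dDpow d m P - dDpow d m Q.
Proof. by rewrite dDpowD dDpowN. Qed.



Lemma dmulE P Q : dmul d P Q = E id (fun m => dDpow d m Q) P.
Proof. by []. Qed.
Lemma dmulDl P P' Q : dmul d (P + P') Q = dmul d P Q + dmul d P' Q.
Proof. by rewrite !dmulE E_add. Qed.
Lemma dmulNl P Q : dmul d (- P) Q = - dmul d P Q.
Proof. by rewrite !dmulE E_opp. Qed.
Lemma dmulBl P P' Q : dmul d (P - P') Q = dmul d P Q - dmul d P' Q.
Proof. by rewrite dmulDl dmulNl. Qed.
Lemma dmul0l Q : dmul d 0 Q = 0.
Proof. by rewrite dmulE E0. Qed.
Lemma dmul_suml (T : Type) (r : seq T) (c : T -> F) (P : T -> MP) Q :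
  dmul d (\sum_(x <- r) c x *: P x) Q = \sum_(x <- r) c x *: dmul d (P x) Q.
Proof. by rewrite dmulE E_sum. Qed.
Lemma dmulXl m Q : dmul d 'X_[m] Q = dDpow d m Q.
Proof. by rewrite dmulE E_X. Qed.

Lemma dmulDr P Q Q' : dmul d P (Q + Q') = dmul d P Q + dmul d P Q'.
Proof.
rewrite /dmul -big_split /=; apply: eq_bigr => m _; by rewrite dDpowD scalerDr.
Qed.
Lemma dmulNr P Q : dmul d P (- Q) = - dmul d P Q.
Proof.
rewrite /dmul -sumrN; apply: eq_bigr => m _; by rewrite dDpowN scalerN.
Qed.
Lemma dmulBr P Q Q' : dmul d P (Q - Q') = dmul d P Q - dmul d P Q'.
Proof. by rewrite dmulDr dmulNr. Qed.
Lemma dDpow0 m : dDpow d m 0 = 0.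
Proof.
rewrite dDpowE; elim: (enum 'I_n) => //= a l ->.
by elim: (m a) => //= k ->; rewrite dD0.
Qed.
Lemma dmul0r P : dmul d P 0 = 0.
Proof. by rewrite /dmul big1 // => m _; rewrite dDpow0 scaler0. Qed.

Lemma dD_sum (T : Type) i (r : seq T) (G : T -> MP) :
  dD d i (\sum_(x <- r) G x) = \sum_(x <- r) dD d i (G x).
Proof.
elim: r => [|a r IH]; first by rewrite !big_nil dD0.
by rewrite !big_cons dDD IH.
Qed.

Lemma dD_dmul i P Q : dD d i (dmul d P Q) = dmul d (dD d i P) Q.
Proof.
rewrite {1}/dmul dD_sum.
under eq_bigr do rewrite dDZ -dDpowU.
rewrite big_split /= [dD d i P]/dD dmulDl; congr (_ + _).
  by rewrite [dcoef d i P]/dcoef dmul_suml; under [RHS]eq_bigr do rewrite dmulXl.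
rewrite [in P * _](mpolyE P) mulr_suml.
under [in RHS]eq_bigr do rewrite -scalerAl -mpolyXD.
by rewrite dmul_suml; under [RHS]eq_bigr do rewrite dmulXl.
Qed.

Lemma dDpow_dmul m P Q : dDpow d m (dmul d P Q) = dmul d (dDpow d m P) Q.
Proof.
rewrite !dDpowE; elim: (enum 'I_n) => //= a l ->.
elim: (m a) => //= k ->; by rewrite dD_dmul.
Qed.

Lemma dmulA A B C : dmul d (dmul d A B) C = dmul d A (dmul d B C).
Proof.
rewrite [dmul d A B]/dmul dmul_suml [dmul d A _]/dmul; apply: eq_bigr => m _.
by rewrite dDpow_dmul.
Qed.



Lemma msizeM' (p q : MP) : (msize (p * q) <= (msize p + msize q).-1)%N.
Proof.
have [->|p0] := eqVneq p 0; first by rewrite mul0r msize0.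
have [->|q0] := eqVneq q 0; first by rewrite mulr0 msize0.
by rewrite msizeM.
Qed.

Lemma msizeB (p q : MP) : (msize (p - q) <= maxn (msize p) (msize q))%N.
Proof. by rewrite (leq_trans (msizeD_le _ _)) // msizeN. Qed.

Lemma msize_dcoef i Q : (msize (dcoef d i Q) <= msize Q)%N.
Proof.
rewrite /dcoef (leq_trans (msize_sum _ _ _)) //.
apply/bigmax_leqP_seq => m mQ _.
by rewrite (leq_trans (msizeZ_le _ _)) // msizeX msize_mdeg_lt.
Qed.

Definition closeP (T : MP -> MP) (M : MP) (a : nat) :=
  msize M = a.+1 /\ forall Q, (msize (T Q - M * Q) <= (a + msize Q).-1)%N.

Lemma closeP_comp T1 T2 M1 M2 a1 a2 : closeP T1 M1 a1 -> closeP T2 M2 a2 ->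
  closeP (fun Q => T1 (T2 Q)) (M1 * M2) (a1 + a2).
Proof.
move=> [s1 h1] [s2 h2]; split.
  have M10 : M1 != 0 by rewrite -(mmeasure_poly_eq0 mdeg) s1.
  have M20 : M2 != 0 by rewrite -(mmeasure_poly_eq0 mdeg) s2.
  by rewrite msizeM // s1 s2 addSn addnS.
move=> Q; set R := T2 Q - M2 * Q.
have -> : T1 (T2 Q) - M1 * M2 * Q = (T1 (T2 Q) - M1 * T2 Q) + M1 * R.
  by rewrite /R mulrBr addrA subrK mulrA.
have hT2 : (msize (T2 Q) <= a2 + msize Q)%N.
  have -> : T2 Q = R + M2 * Q by rewrite /R subrK.
  rewrite (leq_trans (msizeD_le _ _)) // geq_max (leq_trans (h2 Q)) ?leq_pred //.
  by rewrite (leq_trans (msizeM' _ _)) // s2.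
rewrite (leq_trans (msizeD_le _ _)) // geq_max; apply/andP; split.
  rewrite (leq_trans (h1 _)) //; lia.
have [->|R0] := eqVneq R 0; first by rewrite mulr0 msize0.
have R1 : (0 < msize R)%N by rewrite lt0n (mmeasure_poly_eq0 mdeg).
have hR := h2 Q; rewrite -/R in hR.
rewrite (leq_trans (msizeM' _ _)) // s1; lia.
Qed.

Lemma closeP_dD i : closeP (dD d i) 'X_i 1.
Proof.
split; first by rewrite msizeX mdeg1.
move=> Q; rewrite /dD mulrC addrK; exact: msize_dcoef.
Qed.

Lemma closeP_id : closeP id 1 0.
Proof. by split; [rewrite msize1 | move=> Q; rewrite mul1r subrr msize0]. Qed.

Lemma closeP_iter i k : closeP (iter k (dD d i)) ('X_i ^+ k) k.
Proof.
elim: k => [|k IH]; first exact: closeP_id.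
have := @closeP_comp _ _ _ _ _ _ (closeP_dD i) IH.
by rewrite -exprS add1n.
Qed.

Lemma closeP_fo m l : closeP (fo m l) (\prod_(j <- l) 'X_j ^+ m j) (\sum_(j <- l) m j).
Proof.
elim: l => [|a l IH]; first by rewrite !big_nil; exact: closeP_id.
rewrite !big_cons; exact: (@closeP_comp _ _ _ _ _ _ (closeP_iter a (m a)) IH).
Qed.

Lemma closeP_dDpow m : closeP (dDpow d m) 'X_[m] (mdeg m).
Proof.
have := closeP_fo m (enum 'I_n).
by rewrite mpolyXE_id mdegE !big_enum.
Qed.

Lemma keyK P Q : (msize (dmul d P Q - P * Q) <= (msize P + msize Q).-2)%N.
Proof.
have -> : dmul d P Q - P * Q =
    \sum_(m <- msupp P) P@_m *: (dDpow d m Q - 'X_[m] * Q).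
  rewrite [in P * Q](mpolyE P) mulr_suml /dmul -sumrB.
  by apply: eq_bigr => m _; rewrite scalerBr scalerAl.
rewrite (leq_trans (msize_sum _ _ _)) //.
apply/bigmax_leqP_seq => m mP _.
rewrite (leq_trans (msizeZ_le _ _)) //.
have [_ h] := closeP_dDpow m.
have := msize_mdeg_lt mP.
move: (h Q); lia.
Qed.



Lemma msize_gt0 (p : MP) : p != 0 -> (0 < msize p)%N.
Proof. by rewrite lt0n (mmeasure_poly_eq0 mdeg). Qed.
Arguments msize_gt0 {p}.

Lemma msizeM2 (p q : MP) : p != 0 -> q != 0 -> msize (p * q) = (msize p + msize q).-1.
Proof. exact: msizeM. Qed.
Arguments msizeM2 {p q}.

Lemma msize_addl (a b : MP) : (msize b < msize a)%N -> msize (a + b) = msize a.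
Proof.
move=> h; apply/eqP; rewrite eqn_leq; apply/andP; split.
  by rewrite (leq_trans (msizeD_le _ _)) // geq_max leqnn ltnW.
have := msizeB (a + b) b; rewrite addrK; lia.
Qed.

Lemma msize_dmul (P Q : MP) : P != 0 -> Q != 0 ->
  msize (dmul d P Q) = (msize P + msize Q).-1.
Proof.
move=> P0 Q0.
have -> : dmul d P Q = P * Q + (dmul d P Q - P * Q) by rewrite addrC subrK.
have hp := msize_gt0 P0; have hq := msize_gt0 Q0.
rewrite msize_addl (msizeM2 P0 Q0) //.
have := keyK P Q.
move: hp hq; move: (msize P) (msize Q) (msize (dmul d P Q - P * Q)) => a b c; lia.
Qed.

Arguments msize_dmul {P Q}.

Lemma Sym_eq (P Q : MP) : msize P = msize Q -> (msize (P - Q) < msize P)%N ->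
  Sym P = Sym Q.
Proof.
move=> hs hd; rewrite /Sym -hs !big_mkcond /=.
set s0 := undup (msupp P ++ msupp Q).
have us : uniq s0 by apply: undup_uniq.
rewrite (@big_supp_ext _ P s0) //; first last.
- by move=> m /memN_msupp_eq0 ->; rewrite scale0r if_same.
- by move=> m h; rewrite mem_undup mem_cat h.
rewrite [in RHS]big_mkcond /=.
rewrite (@big_supp_ext _ Q s0) //; first last.
- by move=> m /memN_msupp_eq0 ->; rewrite scale0r if_same.
- by move=> m h; rewrite mem_undup mem_cat h orbT.
apply: eq_bigr => m _; case: eqP => // hm.
have : m \notin msupp (P - Q) by apply: msize_mdeg_ge; lia.
move/memN_msupp_eq0; rewrite mcoeffB => /eqP; rewrite subr_eq0 => /eqP ->.
by [].
Qed.

Lemma main_sec (L L1 X1 X2 H omega : MP) :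
  H != 0 ->
  L = dmul d X1 X2 - H ->
  dmul d omega H = - (dmul d X2 H - dmul d H X2) ->
  L1 = dmul d X2 X1 + dmul d omega X1 - H ->
  Sym L = Sym L1.
Proof.
move=> H0 hL hw hL1.
have hh := msize_gt0 H0.
have [X20|X20] := eqVneq X2 0.
  rewrite X20 dmul0l dmul0r subrr oppr0 in hw.
  have w0 : omega = 0.
    apply/eqP; apply/negPn/negP => w0.
    have := msize_dmul w0 H0; rewrite hw msize0 => h.
    have := msize_gt0 w0; lia.
  by rewrite hL1 hL X20 w0 !dmul0l dmul0r !add0r.
have hx := msize_gt0 X20.
have hwb : omega = 0 \/ (msize omega < msize X2)%N.
  have [->|w0] := eqVneq omega 0; first by left.
  right; have := msize_dmul w0 H0; rewrite hw.
  have -> : - (dmul d X2 H - dmul d H X2) =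
     (dmul d H X2 - H * X2) - (dmul d X2 H - X2 * H).
    by rewrite (mulrC H); ring.
  move=> e.
  have := msizeB (dmul d H X2 - H * X2) (dmul d X2 H - X2 * H).
  have := keyK H X2; have := keyK X2 H; have := msize_gt0 w0; lia.
set A := X2 + omega.
have hA : msize A = msize X2.
  rewrite /A; case: hwb => [->|hb]; first by rewrite addr0.
  by rewrite msize_addl.
have AH : dmul d A H = dmul d H X2.
  by rewrite /A dmulDl hw opprB addrC subrK.
have hId : dmul d A L = dmul d L1 X2.
  rewrite hL dmulBr -dmulA AH hL1 -dmulDl -/A dmulBl //.
set R1 := dmul d A L - A * L.
set R2 := dmul d L1 X2 - L1 * X2.
have E : X2 * (L - L1) = R2 - R1 - omega * L.
  rewrite /R2 -hId /R1 /A; ring.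
have [->//|LL] := eqVneq L L1.
have D0 : L - L1 != 0 by rewrite subr_eq0.
have hd := msize_gt0 D0.
have hE := msizeM2 X20 D0.
rewrite E in hE.
have b1 := msizeB (R2 - R1) (omega * L).
have b2 := msizeB R2 R1.
have k1 : (msize R1 <= (msize A + msize L).-2)%N := keyK A L.
have k2 : (msize R2 <= (msize L1 + msize X2).-2)%N := keyK L1 X2.
have bw : (msize (omega * L) <= (msize X2 + msize L).-2)%N.
  case: hwb => [->|hb]; first by rewrite mul0r msize0.
  have := msizeM' omega L.
  have [->|w0] := eqVneq omega 0; first by rewrite mul0r msize0.
  have := msize_gt0 w0.
  move: hb; move: (msize omega) (msize L) (msize X2) (msize (omega * L)) => a b c e; lia.
have s1 : (msize L1 <= maxn (msize L) (msize (L - L1)))%N.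
  have e1 : L - (L - L1) = L1 by ring.
  by have := msizeB L (L - L1); rewrite e1.
have s2 : (msize L <= maxn (msize L1) (msize (L - L1)))%N.
  have e1 : L1 + (L - L1) = L by ring.
  by have := msizeD_le L1 (L - L1); rewrite e1.
rewrite hA in k1.
have [es lt] : msize L = msize L1 /\ (msize (L - L1) < msize L)%N.
  move: hE b1 b2 k1 k2 bw s1 s2 hx hd.
  move: (msize (R2 - R1 - omega * L)) (msize (R2 - R1)) (msize (omega * L))
    (msize R1) (msize R2) (msize (L - L1)) (msize L) (msize L1) (msize X2).
  move=> a b c e f g h i j; lia.
exact: Sym_eq.
Qed.

End Work.

Theorem lemma1 (F : fieldType) (n : nat) (d : 'I_n -> F -> F)
  (d_add : forall i (a b : F), d i (a + b) = d i a + d i b)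
  (d_leibniz : forall i (a b : F), d i (a * b) = d i a * b + a * d i b)
  (d_comm : forall i j (a : F), d i (d j a) = d j (d i a))
  (F_char0 : [pchar F] =i pred0)
  (L L1 X1 X2 H omega : {mpoly F[n]}) :
  H != 0 ->
  L = dmul d X1 X2 - H ->
  (* omega = -[X2,H] H^{-1} is a differential operator *)
  dmul d omega H = - (dmul d X2 H - dmul d H X2) ->
  L1 = dmul d X2 X1 + dmul d omega X1 - H ->
  Sym L = Sym L1.
Proof.
exact: (@main_sec F n d d_add d_leibniz d_comm L L1 X1 X2 H omega).
Qed.
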